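(* Let $h:(0,1/2)\to\mathbb{R}$, $h(t)=-3t(1-2t)\log\frac{1-2t}{t}-3t+1$, and for $r>0$ let $f_r(t)=\frac{2}{3(1-r-3t)}\log\frac{1-2t}{t}$ and $k_r=(1-r)/3$. Then: (1) For $0<r<1$ and $t\in(0,k_r)\cup(k_r,1/2)$, $f_r'(t)$ and $r-h(t)$ have the same sign; in particular $f_r'(t)=0$ if and only if $h(t)=r$. (2) For any $0<r<1$, the equation $f_r'(t)=0$ has a unique solution $m_0(r)\in(0,k_r)$. The function $f_r$ is decreasing on $(0,m_0(r))$ and increasing on $(m_0(r),k_r)$ and on $(k_r,1/2)$. Furthermore $\lim_{t\downarrow0}f_r(t)=\lim_{t\uparrow k_r}f_r(t)=\lim_{t\uparrow1/2}f_r(t)=\infty$ and $\lim_{t\downarrow k_r}f_r(t)=-\infty$. (3) For all $r\ge1$, $f_r$ is increasing on $(0,1/2)$, and $\lim_{t\downarrow0}f_r(t)=-\infty$, $\lim_{t\uparrow1/2}f_r(t)=\infty$. (4) On $(0,1)$ the map $r\mapsto m_0(r)$ is decreasing and $\lim_{r\uparrow1}m_0(r)=0$. (5) On $(0,1)$ the map $r\mapsto f_r(m_0(r))$ is increasing and $\lim_{r\uparrow1}f_r(m_0(r))=\infty$.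
   Context: For $0<r<1$, $f_r$ is regarded as a function on $(0,k_r)\cup(k_r,1/2)$; for $r\ge 1$, $f_r$ is defined on $(0,1/2)$. *)

(* Defs.v *)
From Stdlib Require Import Reals.
From Coquelicot Require Import Coquelicot.
Open Scope R_scope.

Definition hh (t : R) : R :=
  - 3 * t * (1 - 2 * t) * ln ((1 - 2 * t) / t) - 3 * t + 1.

Definition fr (r t : R) : R :=
  2 / (3 * (1 - r - 3 * t)) * ln ((1 - 2 * t) / t).

Definition k (r : R) : R := (1 - r) / 3.

Definition dom_small (r t : R) : Prop := 0 < t < 1/2 /\ t <> k r.

(* Main.v *)
Require Import Defs.
From Stdlib Require Import Reals Lra.
From Coquelicot Require Import Coquelicot.
Open Scope R_scope.

Lemma lim_mult {T} {F : (T -> Prop) -> Prop} {FF : Filter F} (f g : T -> R) a b c :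
  filterlim f F (Rbar_locally a) -> filterlim g F (Rbar_locally b) ->
  is_Rbar_mult a b c -> filterlim (fun x => f x * g x) F (Rbar_locally c).
Proof.
  intros Hf Hg Hm. eapply filterlim_comp_2; [exact Hf|exact Hg|].
  now apply filterlim_Rbar_mult.
Qed.

Lemma to_right0 {T} {F : (T -> Prop) -> Prop} {FF : Filter F} (f : T -> R) :
  filterlim f F (locally 0) -> F (fun x => 0 < f x) -> filterlim f F (at_right 0).
Proof.
  intros Hl Hp P [eps HP].
  assert (H1 := Hl (ball 0 eps) (locally_ball 0 eps)).
  generalize (filter_and _ _ H1 Hp). apply filter_imp.
  intros x [Hb Hx]. now apply HP.
Qed.

Lemma to_left0 {T} {F : (T -> Prop) -> Prop} {FF : Filter F} (f : T -> R) :
  filterlim f F (locally 0) -> F (fun x => f x < 0) -> filterlim f F (at_left 0).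
Proof.
  intros Hl Hp P [eps HP].
  assert (H1 := Hl (ball 0 eps) (locally_ball 0 eps)).
  unfold filtermap. apply (filter_imp (fun x => ball 0 eps (f x) /\ f x < 0)).
  intros x [Hb Hx]. now apply HP. now apply filter_and.
Qed.

Lemma ev_left p (P : R -> Prop) : (forall t, t < p -> P t) -> at_left p P.
Proof. intros H. exists (mkposreal 1 Rlt_0_1). intros; auto. Qed.

Lemma ev_right p (P : R -> Prop) : (forall t, p < t -> P t) -> at_right p P.
Proof. intros H. exists (mkposreal 1 Rlt_0_1). intros; auto. Qed.

Lemma ball_R x e y : ball x e y <-> Rabs (y - x) < e.
Proof. reflexivity. Qed.

Lemma ev_left_ball p e (P : R -> Prop) : 0 < e -> (forall t, p - e < t < p -> P t) -> at_left p P.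
Proof. intros He H. exists (mkposreal e He). intros t Hb Ht.
  apply ball_R in Hb. simpl in Hb. apply H. apply Rabs_def2 in Hb. unfold minus, plus, opp in Hb; simpl in Hb. lra. Qed.

Lemma cont_left (f : R -> R) p : ex_derive f p -> filterlim f (at_left p) (locally (f p)).
Proof. intros H. eapply filterlim_filter_le_1. apply filter_le_within.
  exact (@ex_derive_continuous R_AbsRing R_NormedModule f p H). Qed.

Lemma cont_right (f : R -> R) p : ex_derive f p -> filterlim f (at_right p) (locally (f p)).
Proof. intros H. eapply filterlim_filter_le_1. apply filter_le_within.
  exact (@ex_derive_continuous R_AbsRing R_NormedModule f p H). Qed.

Lemma mult_fin_p a : 0 < a -> is_Rbar_mult (Finite a) p_infty p_infty.
Proof. intros. apply is_Rbar_mult_sym, is_Rbar_mult_p_infty_pos. simpl; lra. Qed.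
Lemma mult_fin_m a : 0 < a -> is_Rbar_mult (Finite a) m_infty m_infty.
Proof. intros. apply is_Rbar_mult_sym, is_Rbar_mult_m_infty_pos. simpl; lra. Qed.
Lemma mult_finn_p a : a < 0 -> is_Rbar_mult (Finite a) p_infty m_infty.
Proof. intros. apply is_Rbar_mult_sym, is_Rbar_mult_p_infty_neg. simpl; lra. Qed.
Lemma mult_finn_m a : a < 0 -> is_Rbar_mult (Finite a) m_infty p_infty.
Proof. intros. apply is_Rbar_mult_sym, is_Rbar_mult_m_infty_neg. simpl; lra. Qed.
Lemma mult_fin a b : is_Rbar_mult (Finite a) (Finite b) (Finite (a*b)).
Proof. reflexivity. Qed.

Lemma mono_incr f df a b x y : (forall t, a < t < b -> is_derive f t (df t)) ->
  a < x -> x < y -> y < b -> (forall c, x < c < y -> 0 < df c) -> f x < f y.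
Proof.
  intros Hd Hx Hxy Hy Hp.
  destruct (MVT_cor2 f df x y Hxy) as [c [Heq Hc]].
  { intros c Hc. apply is_derive_Reals. apply Hd. lra. }
  assert (0 < df c * (y - x)) by (apply Rmult_lt_0_compat; [apply Hp; lra|lra]). lra.
Qed.

Lemma mono_decr f df a b x y : (forall t, a < t < b -> is_derive f t (df t)) ->
  a < x -> x < y -> y < b -> (forall c, x < c < y -> df c < 0) -> f y < f x.
Proof.
  intros Hd Hx Hxy Hy Hp.
  destruct (MVT_cor2 f df x y Hxy) as [c [Heq Hc]].
  { intros c Hc. apply is_derive_Reals. apply Hd. lra. }
  assert (0 < - df c * (y - x)) by (apply Rmult_lt_0_compat; [assert (df c < 0) by (apply Hp; lra); lra|lra]). lra.
Qed.

Lemma lim_ln_p {T} {F : (T -> Prop) -> Prop} (f : T -> R) :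
  filterlim f F (Rbar_locally p_infty) -> filterlim (fun x => ln (f x)) F (Rbar_locally p_infty).
Proof. intros H. eapply filterlim_comp; [exact H|]. exact is_lim_ln_p. Qed.

Lemma lim_ln_m {T} {F : (T -> Prop) -> Prop} (f : T -> R) :
  filterlim f F (at_right 0) -> filterlim (fun x => ln (f x)) F (Rbar_locally m_infty).
Proof. intros H. eapply filterlim_comp; [exact H|]. exact is_lim_ln_0. Qed.

Definition LL t := ln ((1 - 2*t)/t).

Lemma LL_pos t : 0 < t < 1/3 -> 0 < LL t.
Proof.
  intros Ht. unfold LL. rewrite <- ln_1. apply ln_increasing; [lra|].
  replace ((1 - 2*t)/t) with (1 + (1 - 3*t)/t) by (field; lra).
  assert (0 < (1 - 3*t)/t) by (apply Rdiv_lt_0_compat; lra). lra.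
Qed.

Lemma LL_neg t : 1/3 < t < 1/2 -> LL t < 0.
Proof.
  intros Ht. unfold LL. rewrite <- ln_1. apply ln_increasing.
  apply Rdiv_lt_0_compat; lra.
  replace ((1 - 2*t)/t) with (1 - (3*t - 1)/t) by (field; lra).
  assert (0 < (3*t - 1)/t) by (apply Rdiv_lt_0_compat; lra). lra.
Qed.

Lemma LL_third : LL (1/3) = 0.
Proof. unfold LL. replace ((1 - 2*(1/3))/(1/3)) with 1 by field. apply ln_1. Qed.

Lemma hh_LL t : hh t = - 3 * t * (1 - 2 * t) * LL t - 3 * t + 1.
Proof. reflexivity. Qed.

Lemma fr_deriv r t : 0 < t < 1/2 -> 1 - r - 3*t <> 0 ->
  is_derive (fr r) t (2 * (r - hh t) / (3 * t * (1 - 2*t) * (1 - r - 3*t)^2)).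
Proof.
  intros Ht HD. unfold fr, hh.
  assert (Hq : 0 < (1 - 2*t)/t) by (apply Rdiv_lt_0_compat; lra).
  auto_derive.
  - repeat split; auto; lra.
  - change ((1 + - (2 * t)) * / t) with ((1 - 2*t)/t).
    set (L := ln ((1 - 2*t)/t)). field. repeat split; lra.
Qed.

Lemma hh_deriv t : 0 < t < 1/2 ->
  is_derive hh t (-3 * (1 - 4*t) * LL t).
Proof.
  intros Ht. unfold hh, LL.
  assert (Hq : 0 < (1 - 2*t)/t) by (apply Rdiv_lt_0_compat; lra).
  auto_derive.
  - repeat split; auto; lra.
  - change ((1 + - (2 * t)) * / t) with ((1 - 2*t)/t).
    set (L := ln ((1 - 2*t)/t)). field. repeat split; lra.
Qed.

Lemma hh_dec x y : 0 < x -> x < y -> y <= 1/4 -> hh y < hh x.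
Proof.
  intros Hx Hxy Hy.
  apply (mono_decr hh (fun t => -3 * (1 - 4*t) * LL t) 0 (1/2)); try lra.
  - intros t Ht. now apply hh_deriv.
  - intros c Hc. assert (0 < LL c) by (apply LL_pos; lra).
    assert (0 < 3 * (1 - 4*c) * LL c) by (apply Rmult_lt_0_compat; lra). lra.
Qed.

Lemma hh_third : hh (1/3) = 0.
Proof. rewrite hh_LL, LL_third. field. Qed.

Lemma hh_le0 t : 1/4 <= t < 1/2 -> hh t <= 0.
Proof.
  intros Ht. destruct (Rtotal_order t (1/3)) as [H|[H|H]].
  - rewrite <- hh_third. left.
    apply (mono_incr hh (fun t => -3 * (1 - 4*t) * LL t) 0 (1/2)); try lra.
    + intros s Hs. now apply hh_deriv.
    + intros c Hc. assert (0 < LL c) by (apply LL_pos; lra).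
      assert (0 < 3 * (4*c - 1) * LL c) by (apply Rmult_lt_0_compat; lra). lra.
  - subst. rewrite hh_third. lra.
  - rewrite <- hh_third. left.
    apply (mono_decr hh (fun t => -3 * (1 - 4*t) * LL t) 0 (1/2)); try lra.
    + intros s Hs. now apply hh_deriv.
    + intros c Hc. assert (LL c < 0) by (apply LL_neg; lra).
      assert (0 < 3 * (4*c - 1) * - LL c) by (apply Rmult_lt_0_compat; lra). lra.
Qed.

Lemma hh_lt1 t : 0 < t < 1/2 -> hh t < 1.
Proof.
  intros Ht. destruct (Rlt_or_le t (1/4)).
  - rewrite hh_LL. assert (0 < LL t) by (apply LL_pos; lra).
    assert (0 < 3 * t * (1 - 2*t) * LL t) by
      (apply Rmult_lt_0_compat; [apply Rmult_lt_0_compat|]; lra). lra.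
  - assert (hh t <= 0) by (apply hh_le0; lra). lra.
Qed.

Lemma hh_pos_small t : 0 < t < 1/2 -> 0 < hh t -> t < 1/4.
Proof. intros Ht Hp. destruct (Rlt_or_le t (1/4)); auto.
  assert (hh t <= 0) by (apply hh_le0; lra). lra. Qed.

Lemma hh_inj t m : 0 < t < 1/2 -> 0 < m < 1/2 -> 0 < hh m -> hh t = hh m -> t = m.
Proof.
  intros Ht Hm Hp He.
  assert (m < 1/4) by (apply hh_pos_small; auto).
  assert (t < 1/4) by (apply hh_pos_small; lra).
  destruct (Rtotal_order t m) as [H3|[H3|H3]]; auto.
  - assert (hh m < hh t) by (apply hh_dec; lra). lra.
  - assert (hh t < hh m) by (apply hh_dec; lra). lra.
Qed.

Lemma hh_above m c : 0 < m < 1/2 -> 0 < hh m -> 0 < c < m -> hh m < hh c.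
Proof. intros Hm Hp Hc. assert (m < 1/4) by (apply hh_pos_small; auto).
  apply hh_dec; lra. Qed.

Lemma hh_below m c : 0 < m < 1/2 -> 0 < hh m -> m < c < 1/2 -> hh c < hh m.
Proof. intros Hm Hp Hc. assert (m < 1/4) by (apply hh_pos_small; auto).
  destruct (Rlt_or_le c (1/4)).
  - apply hh_dec; lra.
  - assert (hh c <= 0) by (apply hh_le0; lra). lra.
Qed.

Definition dfr r t := 2 * (r - hh t) / (3 * t * (1 - 2*t) * (1 - r - 3*t)^2).

Lemma dfr_sign r t : 0 < t < 1/2 -> 1 - r - 3*t <> 0 ->
  (0 < dfr r t <-> hh t < r) /\ (dfr r t < 0 <-> r < hh t) /\ (dfr r t = 0 <-> hh t = r).
Proof.
  intros Ht HD.
  assert (HP : 0 < 3 * t * (1 - 2*t) * (1 - r - 3*t)^2).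
  { apply Rmult_lt_0_compat. apply Rmult_lt_0_compat; lra.
    apply pow2_gt_0; auto. }
  assert (Hc : 0 < 2 / (3 * t * (1 - 2*t) * (1 - r - 3*t)^2)) by (apply Rdiv_lt_0_compat; lra).
  assert (E : dfr r t = (r - hh t) * (2 / (3 * t * (1 - 2*t) * (1 - r - 3*t)^2)))
    by (unfold dfr; field; lra).
  rewrite E. set (c := 2 / (3 * t * (1 - 2*t) * (1 - r - 3*t)^2)) in *.
  split; [|split]; split; intros H.
  - destruct (Rlt_or_le (hh t) r); auto. assert ((r - hh t) * c <= 0) by nra. lra.
  - nra.
  - destruct (Rlt_or_le r (hh t)); auto. assert (0 <= (r - hh t) * c) by nra. lra.
  - nra.
  - apply Rmult_integral in H. destruct H; lra.
  - rewrite H. ring.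
Qed.

Lemma ln_lt_id y : 0 < y -> ln y < y.
Proof. intros Hy. assert (H := exp_ineq1_le (ln y)). rewrite exp_ln in H; lra. Qed.

Lemma hh_big r : 0 < r < 1 -> exists s, 0 < s < k r /\ r < hh s.
Proof.
  intros Hr. set (d := (1 - r)/9). assert (Hd : 0 < d < 1/9) by (unfold d; lra).
  exists (d*d). split. { unfold k. split. nra. unfold d. nra. }
  assert (Hs : 0 < d * d) by nra.
  assert (HL1 : LL (d*d) <= ln (/ (d*d))).
  { unfold LL. apply ln_le. apply Rdiv_lt_0_compat; nra.
    unfold Rdiv. rewrite <- (Rmult_1_l (/ (d*d))) at 2. apply Rmult_le_compat_r.
    left; apply Rinv_0_lt_compat; lra. nra. }
  rewrite ln_Rinv, ln_mult in HL1 by lra.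
  assert (HL2 : - ln d < / d).
  { rewrite <- ln_Rinv by lra. apply ln_lt_id. apply Rinv_0_lt_compat; lra. }
  assert (Hi : d * / d = 1) by (field; lra).
  assert (HL : LL (d*d) < 2 * / d) by lra.
  rewrite hh_LL.
  assert (0 < 3 * (d*d) * (1 - 2 * (d*d)) * (2 * / d - LL (d*d))).
  { apply Rmult_lt_0_compat; [|lra]. apply Rmult_lt_0_compat; nra. }
  assert (1 - r = 9 * d) by (unfold d; lra).
  set (X := 3 * (d*d) * (1 - 2 * (d*d)) * LL (d*d)) in *.
  assert (E : 3 * (d*d) * (1 - 2 * (d*d)) * (2 * / d - LL (d*d)) = 6*d*(1 - 2*(d*d)) - X)
    by (unfold X; field; lra).
  rewrite E in H.
  replace (- 3 * (d * d) * (1 - 2 * (d * d)) * LL (d * d)) with (- X) by (unfold X; ring).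
  nra.
Qed.

Lemma hh_cont a : 0 < a < 1/2 -> forall r, continuity_pt (fun t => r - hh t) a.
Proof.
  intros Ha r. apply (continuity_pt_minus (fun _ => r) hh).
  - apply continuity_pt_const. intros x y; reflexivity.
  - apply derivable_continuous_pt. exists (-3 * (1 - 4*a) * LL a).
    apply is_derive_Reals, hh_deriv; auto.
Qed.

Lemma hh_at_k r : 0 < r < 1 -> hh (k r) < r.
Proof.
  intros Hr. assert (0 < LL (k r)) by (apply LL_pos; unfold k; lra).
  rewrite hh_LL. unfold k in *.
  assert (0 < 3 * ((1-r)/3) * (1 - 2 * ((1-r)/3)) * LL ((1-r)/3))
    by (apply Rmult_lt_0_compat; [apply Rmult_lt_0_compat|]; lra).
  lra.
Qed.

Lemma root_exists r : 0 < r < 1 -> exists m, 0 < m < k r /\ hh m = r.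
Proof.
  intros Hr. destruct (hh_big r Hr) as [s [Hs Hhs]].
  assert (Hk := hh_at_k r Hr).
  destruct (Ranalysis5.IVT_interv (fun t => r - hh t) s (k r)) as [z [Hz Hz0]].
  - intros a Ha. apply hh_cont. unfold k in *; lra.
  - lra.
  - lra.
  - lra.
  - exists z. destruct Hz as [[Hz1|Hz1] [Hz2|Hz2]]; subst; try lra.
Qed.

Lemma Dne r t : t <> k r -> 1 - r - 3*t <> 0.
Proof. intros H H1. apply H. unfold k. lra. Qed.

Lemma fr_deriv' r t : 0 < t < 1/2 -> 1 - r - 3*t <> 0 -> is_derive (fr r) t (dfr r t).
Proof. apply fr_deriv. Qed.

Lemma part1 r t : 0 < r < 1 -> dom_small r t ->
     ex_derive (fr r) t /\
     (Derive (fr r) t > 0 <-> r - hh t > 0) /\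
     (Derive (fr r) t < 0 <-> r - hh t < 0) /\
     (Derive (fr r) t = 0 <-> hh t = r).
Proof.
  intros Hr [Ht Htk]. assert (HD := Dne r t Htk).
  assert (Hd := fr_deriv' r t Ht HD).
  rewrite (is_derive_unique _ _ _ Hd).
  destruct (dfr_sign r t Ht HD) as [[A1 A2] [[B1 B2] [C1 C2]]].
  split; [exists (dfr r t); auto|]. unfold Rgt.
  split; [split; intros; [apply A1 in H; lra| apply A2; lra]|].
  split; [split; intros; [apply B1 in H; lra| apply B2; lra]|].
  split; auto.
Qed.

Lemma LL_lim0 : filterlim (fun t => ln ((1 - 2*t)/t)) (at_right 0) (Rbar_locally p_infty).
Proof.
  apply lim_ln_p. change (fun t => (1 - 2*t)/t) with (fun t => (1 - 2*t) * / t).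
  apply (lim_mult _ _ (1 - 2*0) p_infty).
  - apply (cont_right (fun t => 1 - 2*t)). auto_derive. auto.
  - exact filterlim_Rinv_0_right.
  - apply mult_fin_p. lra.
Qed.

Lemma LL_lim_half : filterlim (fun t => ln ((1 - 2*t)/t)) (at_left (1/2)) (Rbar_locally m_infty).
Proof.
  apply lim_ln_m. apply to_right0.
  - assert (H := cont_left (fun t => (1 - 2*t)/t) (1/2)).
    cbv beta in H. replace ((1 - 2*(1/2))/(1/2)) with 0 in H by field. apply H.
    auto_derive. lra.
  - apply (ev_left_ball (1/2) (1/2)). lra. intros t Ht.
    apply Rdiv_lt_0_compat; lra.
Qed.

Lemma LL_cont_left p : 0 < p < 1/2 ->
  filterlim (fun t => ln ((1 - 2*t)/t)) (at_left p) (locally (ln ((1 - 2*p)/p))).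
Proof.
  intros Hp. apply (cont_left (fun t => ln ((1 - 2*t)/t))). auto_derive.
  repeat split; try lra. apply Rdiv_lt_0_compat; lra.
Qed.

Lemma LL_cont_right p : 0 < p < 1/2 ->
  filterlim (fun t => ln ((1 - 2*t)/t)) (at_right p) (locally (ln ((1 - 2*p)/p))).
Proof.
  intros Hp. apply (cont_right (fun t => ln ((1 - 2*t)/t))). auto_derive.
  repeat split; try lra. apply Rdiv_lt_0_compat; lra.
Qed.

Lemma c_fin_right0 r : r <> 1 ->
  filterlim (fun t => 2 / (3 * (1 - r - 3*t))) (at_right 0) (locally (2 / (3 * (1 - r - 3*0)))).
Proof.
  intros Hr. apply (cont_right (fun t => 2 / (3 * (1 - r - 3*t)))). auto_derive. lra.
Qed.

Lemma c_fin_left_half r : -1/2 < r ->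
  filterlim (fun t => 2 / (3 * (1 - r - 3*t))) (at_left (1/2)) (locally (2 / (3 * (1 - r - 3*(1/2))))).
Proof.
  intros Hr. apply (cont_left (fun t => 2 / (3 * (1 - r - 3*t)))). auto_derive. lra.
Qed.

Lemma c_inf_left_k r :
  filterlim (fun t => 2 / (3 * (1 - r - 3*t))) (at_left (k r)) (Rbar_locally p_infty).
Proof.
  change (fun t => 2 / (3 * (1 - r - 3*t))) with (fun t => 2 * / (3 * (1 - r - 3*t))).
  apply (lim_mult _ _ 2 p_infty).
  - apply filterlim_const.
  - eapply filterlim_comp; [|exact filterlim_Rinv_0_right].
    apply to_right0.
    + assert (H := cont_left (fun t => 3 * (1 - r - 3*t)) (k r)).
      cbv beta in H. replace (3 * (1 - r - 3 * k r)) with 0 in H by (unfold k; field). apply H.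
      auto_derive. auto.
    + apply ev_left. intros t Ht. unfold k in Ht. lra.
  - apply mult_fin_p. lra.
Qed.

Lemma c_inf_right_k r :
  filterlim (fun t => 2 / (3 * (1 - r - 3*t))) (at_right (k r)) (Rbar_locally m_infty).
Proof.
  change (fun t => 2 / (3 * (1 - r - 3*t))) with (fun t => 2 * / (3 * (1 - r - 3*t))).
  apply (lim_mult _ _ 2 m_infty).
  - apply filterlim_const.
  - eapply filterlim_comp; [|exact filterlim_Rinv_0_left].
    apply to_left0.
    + assert (H := cont_right (fun t => 3 * (1 - r - 3*t)) (k r)).
      cbv beta in H. replace (3 * (1 - r - 3 * k r)) with 0 in H by (unfold k; field). apply H.
      auto_derive. auto.
    + apply ev_right. intros t Ht. unfold k in Ht. lra.
  - apply mult_fin_m. lra.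
Qed.

Lemma c_inf_right0_1 :
  filterlim (fun t => 2 / (3 * (1 - 1 - 3*t))) (at_right 0) (Rbar_locally m_infty).
Proof.
  change (fun t => 2 / (3 * (1 - 1 - 3*t))) with (fun t => 2 * / (3 * (1 - 1 - 3*t))).
  apply (lim_mult _ _ 2 m_infty).
  - apply filterlim_const.
  - eapply filterlim_comp; [|exact filterlim_Rinv_0_left].
    apply to_left0.
    + assert (H := cont_right (fun t => 3 * (1 - 1 - 3*t)) 0).
      cbv beta in H. replace (3 * (1 - 1 - 3 * 0)) with 0 in H by field. apply H.
      auto_derive. auto.
    + apply ev_right. intros t Ht. lra.
  - apply mult_fin_m. lra.
Qed.

Lemma fr_eta r : fr r = fun t => 2 / (3 * (1 - r - 3 * t)) * ln ((1 - 2 * t) / t).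
Proof. reflexivity. Qed.

Lemma lim_a r : r < 1 -> filterlim (fr r) (at_right 0) (Rbar_locally p_infty).
Proof.
  intros Hr. rewrite fr_eta.
  apply (lim_mult _ _ (2 / (3 * (1 - r - 3*0))) p_infty).
  apply c_fin_right0; lra. apply LL_lim0.
  apply mult_fin_p. apply Rdiv_lt_0_compat; lra.
Qed.

Lemma lim_half r : -1/2 < r -> filterlim (fr r) (at_left (1/2)) (Rbar_locally p_infty).
Proof.
  intros Hr. rewrite fr_eta.
  apply (lim_mult _ _ (2 / (3 * (1 - r - 3*(1/2)))) m_infty).
  apply c_fin_left_half; lra. apply LL_lim_half.
  apply mult_finn_m. 
  replace (2 / (3 * (1 - r - 3*(1/2)))) with (- (2 / (3 * (r + 1/2)))) by (field; lra).
  assert (0 < 2 / (3 * (r + 1/2))) by (apply Rdiv_lt_0_compat; lra). lra.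
Qed.

Lemma lim_kl r : 0 < r < 1 -> filterlim (fr r) (at_left (k r)) (Rbar_locally p_infty).
Proof.
  intros Hr. rewrite fr_eta.
  apply (lim_mult _ _ p_infty (ln ((1 - 2*k r)/k r))).
  apply c_inf_left_k. apply LL_cont_left; unfold k; lra.
  apply is_Rbar_mult_p_infty_pos. simpl. apply (LL_pos (k r)). unfold k; lra.
Qed.

Lemma lim_kr r : 0 < r < 1 -> filterlim (fr r) (at_right (k r)) (Rbar_locally m_infty).
Proof.
  intros Hr. rewrite fr_eta.
  apply (lim_mult _ _ m_infty (ln ((1 - 2*k r)/k r))).
  apply c_inf_right_k. apply LL_cont_right; unfold k; lra.
  apply is_Rbar_mult_m_infty_pos. simpl. apply (LL_pos (k r)). unfold k; lra.
Qed.

Lemma lim_0_ge1 r : 1 <= r -> filterlim (fr r) (at_right 0) (Rbar_locally m_infty).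
Proof.
  intros Hr. destruct Hr as [Hr|Hr].
  - rewrite fr_eta.
    apply (lim_mult _ _ (2 / (3 * (1 - r - 3*0))) p_infty).
    apply c_fin_right0; lra. apply LL_lim0.
    apply mult_finn_p.
    replace (2 / (3 * (1 - r - 3*0))) with (- (2 / (3 * (r - 1)))) by (field; lra).
    assert (0 < 2 / (3 * (r - 1))) by (apply Rdiv_lt_0_compat; lra). lra.
  - subst r. rewrite fr_eta.
    apply (lim_mult _ _ m_infty p_infty).
    apply c_inf_right0_1. apply LL_lim0.
    apply is_Rbar_mult_m_infty_pos. simpl. exact I.
Qed.

Lemma deriv0_hh r t : 0 < t < 1/2 -> 1 - r - 3*t <> 0 -> is_derive (fr r) t 0 -> hh t = r.
Proof.
  intros Ht HD H. assert (H2 := fr_deriv' r t Ht HD).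
  assert (E : dfr r t = 0).
  { rewrite <- (is_derive_unique _ _ _ H2). apply (is_derive_unique _ _ _ H). }
  now apply (dfr_sign r t Ht HD).
Qed.

Lemma part2 r : 0 < r < 1 ->
     exists m, 0 < m < k r /\ is_derive (fr r) m 0 /\
       (forall t, dom_small r t -> is_derive (fr r) t 0 -> t = m) /\
       (forall x y, 0 < x -> x < y -> y < m -> fr r y < fr r x) /\
       (forall x y, m < x -> x < y -> y < k r -> fr r x < fr r y) /\
       (forall x y, k r < x -> x < y -> y < 1/2 -> fr r x < fr r y) /\
       filterlim (fr r) (at_right 0) (Rbar_locally p_infty) /\
       filterlim (fr r) (at_left (k r)) (Rbar_locally p_infty) /\
       filterlim (fr r) (at_left (1/2)) (Rbar_locally p_infty) /\
       filterlim (fr r) (at_right (k r)) (Rbar_locally m_infty).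
Proof.
  intros Hr. destruct (root_exists r Hr) as [m [Hm Hhm]].
  assert (Hk : k r < 1/3) by (unfold k; lra).
  assert (Hm2 : 0 < m < 1/2) by lra.
  assert (Hp : 0 < hh m) by lra.
  exists m. split; [auto|].
  split.
  { assert (H := fr_deriv' r m Hm2 (Dne r m ltac:(lra))).
    assert (E : dfr r m = 0) by (apply (dfr_sign r m Hm2 (Dne r m ltac:(lra))); auto).
    rewrite E in H. exact H. }
  split.
  { intros t [Ht Htk] Hd. assert (E := deriv0_hh r t Ht (Dne r t Htk) Hd).
    apply hh_inj; auto. lra. }
  split.
  { intros x y Hx Hxy Hy. apply (mono_decr (fr r) (dfr r) 0 m); auto.
    - intros t Ht. apply fr_deriv'. lra. apply Dne. lra.
    - intros c Hc. apply (dfr_sign r c ltac:(lra) (Dne r c ltac:(lra))).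
      rewrite <- Hhm. apply hh_above; auto; lra. }
  split.
  { intros x y Hx Hxy Hy. apply (mono_incr (fr r) (dfr r) m (k r)); auto.
    - intros t Ht. apply fr_deriv'. lra. apply Dne. lra.
    - intros c Hc. apply (dfr_sign r c ltac:(lra) (Dne r c ltac:(lra))).
      rewrite <- Hhm. apply hh_below; auto; lra. }
  split.
  { intros x y Hx Hxy Hy. apply (mono_incr (fr r) (dfr r) (k r) (1/2)); auto.
    - intros t Ht. apply fr_deriv'. lra. apply Dne. lra.
    - intros c Hc. apply (dfr_sign r c ltac:(lra) (Dne r c ltac:(lra))).
      rewrite <- Hhm. apply hh_below; auto; lra. }
  split. apply lim_a; lra.
  split. apply lim_kl; lra.
  split. apply lim_half; lra.
  apply lim_kr; lra.
Qed.

Lemma part3 r : 1 <= r ->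
     (forall x y, 0 < x -> x < y -> y < 1/2 -> fr r x < fr r y) /\
     filterlim (fr r) (at_right 0) (Rbar_locally m_infty) /\
     filterlim (fr r) (at_left (1/2)) (Rbar_locally p_infty).
Proof.
  intros Hr. split; [|split].
  - intros x y Hx Hxy Hy. apply (mono_incr (fr r) (dfr r) 0 (1/2)); auto.
    + intros t Ht. apply fr_deriv'. lra. lra.
    + intros c Hc. apply (dfr_sign r c ltac:(lra) ltac:(lra)).
      assert (hh c < 1) by (apply hh_lt1; lra). lra.
  - apply lim_0_ge1; auto.
  - apply lim_half; lra.
Qed.

Section M0.
Variable m0 : R -> R.
Hypothesis Hm0 : forall r, 0 < r < 1 -> 0 < m0 r < k r /\ is_derive (fr r) (m0 r) 0.

Lemma m0_hh r : 0 < r < 1 -> hh (m0 r) = r /\ 0 < m0 r < 1/4.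
Proof.
  intros Hr. destruct (Hm0 r Hr) as [Hm Hd].
  assert (Hk : k r < 1/3) by (unfold k; lra).
  assert (E : hh (m0 r) = r) by (apply (deriv0_hh r); [lra|apply Dne; lra|auto]).
  split; auto. split; [lra|]. apply hh_pos_small; lra.
Qed.

Lemma m0_decr r1 r2 : 0 < r1 -> r1 < r2 -> r2 < 1 -> m0 r2 < m0 r1.
Proof.
  intros H1 H12 H2. destruct (m0_hh r1 ltac:(lra)) as [E1 B1].
  destruct (m0_hh r2 ltac:(lra)) as [E2 B2].
  destruct (Rtotal_order (m0 r2) (m0 r1)) as [H|[H|H]]; auto.
  - rewrite H in E2. lra.
  - assert (hh (m0 r2) < hh (m0 r1)) by (apply hh_dec; lra). lra.
Qed.

Lemma m0_small e r : 0 < e <= 1/8 -> 0 < r < 1 -> hh e < r -> m0 r < e.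
Proof.
  intros He Hr Hh. destruct (m0_hh r Hr) as [E B].
  destruct (Rtotal_order (m0 r) e) as [H|[H|H]]; auto.
  - rewrite H in E. lra.
  - assert (hh (m0 r) < hh e) by (apply hh_dec; lra). lra.
Qed.

Lemma m0_eventually e : 0 < e <= 1/8 -> at_left 1 (fun r => 0 < r < 1 /\ 0 < m0 r < e).
Proof.
  intros He. assert (Hh : hh e < 1) by (apply hh_lt1; lra).
  assert (Hd : 0 < Rmin (1 - hh e) 1) by (apply Rmin_glb_lt; lra).
  exists (mkposreal _ Hd). intros r Hb Hr1. apply ball_R in Hb. simpl in Hb.
  apply Rabs_def2 in Hb. unfold minus, plus, opp in Hb; simpl in Hb.
  assert (Hm1 := Rmin_l (1 - hh e) 1). assert (Hm2 := Rmin_r (1 - hh e) 1).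
  assert (0 < r < 1) by lra.
  destruct (m0_hh r ltac:(lra)) as [E B].
  split; [lra|]. split; [lra|]. apply m0_small; lra.
Qed.

Lemma m0_lim : filterlim m0 (at_left 1) (locally 0).
Proof.
  intros P [eps HP].
  assert (He : 0 < Rmin eps (1/8) <= 1/8).
  { split. apply Rmin_glb_lt; [apply cond_pos|lra]. apply Rmin_r. }
  generalize (m0_eventually _ He). unfold filtermap. apply filter_imp.
  intros r [Hr Hm]. apply HP. apply ball_R.
  replace (minus (m0 r) 0) with (m0 r) by (unfold minus, plus, opp; simpl; ring).
  rewrite Rabs_pos_eq by lra. assert (H := Rmin_l eps (1/8)). lra.
Qed.

Lemma fr_at_m0 r : 0 < r < 1 -> fr r (m0 r) = 2 / (9 * m0 r * (1 - 2 * m0 r)).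
Proof.
  intros Hr. destruct (m0_hh r Hr) as [E B].
  set (m := m0 r) in *.
  assert (HL : 0 < LL m) by (apply LL_pos; lra).
  rewrite hh_LL in E.
  change (fr r m) with (2 / (3 * (1 - r - 3 * m)) * LL m).
  replace (1 - r - 3 * m) with (3 * m * (1 - 2*m) * LL m) by lra.
  field. repeat split; lra.
Qed.

Lemma g_incr r1 r2 : 0 < r1 -> r1 < r2 -> r2 < 1 -> fr r1 (m0 r1) < fr r2 (m0 r2).
Proof.
  intros H1 H12 H2. rewrite !fr_at_m0 by lra.
  destruct (m0_hh r1 ltac:(lra)) as [E1 B1].
  destruct (m0_hh r2 ltac:(lra)) as [E2 B2].
  assert (D := m0_decr r1 r2 H1 H12 H2).
  unfold Rdiv. apply Rmult_lt_compat_l; [lra|]. apply Rinv_lt_contravar.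
  - apply Rmult_lt_0_compat; apply Rmult_lt_0_compat; lra.
  - nra.
Qed.

Lemma g_lim : filterlim (fun r => fr r (m0 r)) (at_left 1) (Rbar_locally p_infty).
Proof.
  intros P [M HM].
  set (A := Rabs M + 1).
  assert (HA : 0 < A) by (unfold A; assert (H := Rabs_pos M); lra).
  assert (He : 0 < Rmin (1/8) (2 / (9 * A)) <= 1/8).
  { split. apply Rmin_glb_lt; [lra|]. apply Rdiv_lt_0_compat; lra. apply Rmin_l. }
  generalize (m0_eventually _ He). unfold filtermap. apply filter_imp.
  intros r [Hr Hm]. apply HM. rewrite fr_at_m0 by lra.
  set (m := m0 r) in *.
  assert (Hmin := Rmin_r (1/8) (2 / (9 * A))).
  assert (Hq : 9 * m * (1 - 2*m) < 2 / A).
  { assert (2 / (9 * A) * 9 = 2 / A) by (field; lra). nra. }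
  assert (Hq0 : 0 < 9 * m * (1 - 2*m)) by (apply Rmult_lt_0_compat; lra).
  set (q := 9 * m * (1 - 2*m)) in *.
  assert (HqA : q * A < 2).
  { apply (Rmult_lt_compat_r A) in Hq; [|lra].
    replace (2 / A * A) with 2 in Hq by (field; lra). lra. }
  assert (A < 2 / q).
  { apply (Rmult_lt_reg_r q); [lra|]. replace (2 / q * q) with 2 by (field; lra). lra. }
  assert (M <= Rabs M) by apply Rle_abs. unfold A in *. lra.
Qed.
End M0.

Theorem lemma5p3 :
  (* (1) *)
  (forall r t, 0 < r < 1 -> dom_small r t ->
     ex_derive (fr r) t /\
     (Derive (fr r) t > 0 <-> r - hh t > 0) /\
     (Derive (fr r) t < 0 <-> r - hh t < 0) /\
     (Derive (fr r) t = 0 <-> hh t = r)) /\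
  (* (2) *)
  (forall r, 0 < r < 1 ->
     exists m, 0 < m < k r /\ is_derive (fr r) m 0 /\
       (forall t, dom_small r t -> is_derive (fr r) t 0 -> t = m) /\
       (forall x y, 0 < x -> x < y -> y < m -> fr r y < fr r x) /\
       (forall x y, m < x -> x < y -> y < k r -> fr r x < fr r y) /\
       (forall x y, k r < x -> x < y -> y < 1/2 -> fr r x < fr r y) /\
       filterlim (fr r) (at_right 0) (Rbar_locally p_infty) /\
       filterlim (fr r) (at_left (k r)) (Rbar_locally p_infty) /\
       filterlim (fr r) (at_left (1/2)) (Rbar_locally p_infty) /\
       filterlim (fr r) (at_right (k r)) (Rbar_locally m_infty)) /\
  (* (3) *)
  (forall r, 1 <= r ->
     (forall x y, 0 < x -> x < y -> y < 1/2 -> fr r x < fr r y) /\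
     filterlim (fr r) (at_right 0) (Rbar_locally m_infty) /\
     filterlim (fr r) (at_left (1/2)) (Rbar_locally p_infty)) /\
  (* (4), (5): for the function m0 given by (2) *)
  (forall m0 : R -> R,
     (forall r, 0 < r < 1 -> 0 < m0 r < k r /\ is_derive (fr r) (m0 r) 0) ->
     (forall r1 r2, 0 < r1 -> r1 < r2 -> r2 < 1 -> m0 r2 < m0 r1) /\
     filterlim m0 (at_left 1) (locally 0) /\
     (forall r1 r2, 0 < r1 -> r1 < r2 -> r2 < 1 -> fr r1 (m0 r1) < fr r2 (m0 r2)) /\
     filterlim (fun r => fr r (m0 r)) (at_left 1) (Rbar_locally p_infty)).
Proof.
  split; [exact part1|]. split; [exact part2|]. split; [exact part3|].
  intros m0 Hm0. split; [exact (m0_decr m0 Hm0)|].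
  split; [exact (m0_lim m0 Hm0)|].
  split; [exact (g_incr m0 Hm0)|].
  exact (g_lim m0 Hm0).
Qed.
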